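(* Let $0\le i\le m-1$, let $u\in I_i$, and let $j\ge m-i$. Then $$\mathrm{ord}_p\big(p^j\gamma_{i,j}\big)-\frac{\deg(p^ju)}{p-1}\ \ge\ p^{\,j-(m-i)+1}-1.$$
   Context: Let $p$ be a prime, $q=p^a$, and let $W_m$ be the Witt vectors of length $m$. Write $f\in W_m(\mathbb{F}_q[x_1^{\pm1},\dots,x_n^{\pm1}])$ uniquely as $f=\sum_{i=0}^{m-1}\sum_{u\in I_i}\lambda_i(a_{iu}x^u)$, where $\lambda_i$ places an element in the $i$-th Witt coordinate and zeros elsewhere, $I_i\subset\mathbb{Z}^n$ is finite and $a_{iu}\in\mathbb{F}_q^\times$. Let $\Delta$ be the convex hull of $\{p^{m-i-1}u:u\in I_i\}\cup\{0\}$, assumed $n$-dimensional, and let $\deg(u)=\min\{c\ge0:u\in c\Delta\}$. Let $\mathrm{ord}_p(p)=1$, let $E(t)=\exp(\sum_{i\ge0}t^{p^i}/p^i)$, and fix a primitive $p^m$-th root of unity $\zeta$. For $l=1,\dots,m$, $\pi_l$ is the unique root of $\sum_{i\ge0}t^{p^i}/p^i=0$ with $\mathrm{ord}_p\pi_l=\frac1{p^{l-1}(p-1)}$ and $E(\pi_l)=\zeta^{p^{m-l}}$. Define $$\gamma_{i,j}=\sum_{l=0}^{j}\frac{\pi_{m-i}^{p^l}}{p^l}.$$ *)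

(* Defs.v *)
From HB Require Import structures.
From mathcomp Require Import all_boot all_order all_algebra.
From mathcomp Require Import boolp classical_sets reals constructive_ereal.
Set Implicit Arguments. Unset Strict Implicit. Unset Printing Implicit Defensive.
Import Order.TTheory GRing.Theory Num.Theory.
Local Open Scope ring_scope.
Local Open Scope classical_set_scope.

Definition is_ordp (K : fieldType) (R : realDomainType) (p : nat)
    (ord : K -> \bar R) : Prop :=
  [/\ forall x, (ord x == +oo%E) = (x == 0),
      forall x, x != 0 -> ord x \is a fin_num,
      forall x y, ord (x * y)%R = (ord x + ord y)%E,
      forall x y, (Order.min (ord x) (ord y) <= ord (x + y)%R)%E &
      ord p%:R = 1%:E ].

Definition ord_series_conv (K : fieldType) (R : realDomainType)
    (ord : K -> \bar R) (s : nat -> K) (L : K) : Prop :=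
  forall M : R, exists N : nat, forall k : nat, (N <= k)%N ->
    (M%:E <= ord (\sum_(l < k) s l - L)%R)%E.

(* Truncation (up to degree n, harmlessly including higher terms) of
   sum_{i>=0} t^(p^i)/p^i. *)
Definition AH_log_poly (p n : nat) : {poly rat} :=
  \sum_(i < n.+1) ((p ^ i)%:R)^-1 *: 'X^(p ^ i).

(* n-th coefficient of the Artin-Hasse exponential
   E(t) = exp(sum_{i>=0} t^(p^i)/p^i) as a formal power series:
   [t^n] sum_k g^k / k!, where only k <= n contributes. *)
Definition AH_coef (p n : nat) : rat :=
  \sum_(k < n.+1) ((AH_log_poly p n) ^+ k)`_n / (k`!)%:R.

(* Generators of Delta: the points p^(m-i-1) u, u in I_i, 0 <= i <= m-1,
   viewed in R^n. (Delta is their convex hull together with 0.) *)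
Definition Delta_gens (R : realType) (n p m : nat)
    (I : nat -> seq 'rV[int]_n) : seq 'rV[R]_n :=
  flatten [seq [seq (p ^ (m - i - 1))%:R *: map_mx (fun z : int => z%:~R) u
               | u <- I i] | i <- iota 0 m].

(* x lies in c * conv(S u {0}). *)
Definition in_scaled_hull (R : realType) (n : nat) (S : seq 'rV[R]_n)
    (c : R) (x : 'rV[R]_n) : Prop :=
  exists lam : nat -> R,
    [/\ forall k, 0 <= lam k,
        \sum_(k < size S) lam k <= 1 &
        x = c *: \sum_(k < size S) lam k *: S`_k ].

(* conv(S u {0}) is n-dimensional, i.e. S spans R^n. *)
Definition full_dim (R : realType) (n : nat) (S : seq 'rV[R]_n) : Prop :=
  forall x : 'rV[R]_n, exists lam : nat -> R,
    x = \sum_(k < size S) lam k *: S`_k.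

(* deg(x) = min { c >= 0 : x in c Delta } (taken as an infimum; the set is
   closed so this is the minimum whenever it is nonempty). *)
Definition deg_Delta (R : realType) (n : nat) (S : seq 'rV[R]_n)
    (x : 'rV[R]_n) : R :=
  inf [set c : R | 0 <= c /\ in_scaled_hull S c x].

Definition gamma_ij (K : fieldType) (p j : nat) (pi : K) : K :=
  \sum_(l < j.+1) pi ^+ (p ^ l) / (p ^ l)%:R.

(* Main.v *)
Require Import Defs.
From HB Require Import structures.
From mathcomp Require Import all_boot all_order all_algebra.
From mathcomp Require Import boolp classical_sets reals constructive_ereal.
From mathcomp Require Import zify ring lra.
Import Order.TTheory GRing.Theory Num.Theory.
Local Open Scope ring_scope.

Section Ord.
Definition ordr_ {R : realType} {K : fieldType} (ord : K -> \bar R) x := fine (ord x).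
Definition ge_ {R : realType} {K : fieldType} (ord : K -> \bar R) (x : K) (B : R) := (B%:E <= ord x)%E.
Context {R : realType} {K : fieldType} {ord : K -> \bar R} {p : nat}.
Hypothesis Ho : is_ordp p ord.
Local Notation ordr := (ordr_ ord).
Local Notation ge := (ge_ ord).

Lemma ordrE x : x != 0 -> ord x = (ordr x)%:E.
Proof. case: Ho => _ Hf _ _ _ /Hf hx. by rewrite /ordr_ fineK. Qed.

Lemma ord0 : ord 0 = +oo%E.
Proof. case: Ho => H0 _ _ _ _. by apply/eqP; rewrite H0. Qed.

Lemma ordrM x y : x != 0 -> y != 0 -> ordr (x * y) = ordr x + ordr y.
Proof.
move=> hx hy; case: Ho => _ _ HM _ _.
have : ord (x * y) = (ordr x + ordr y)%:E by rewrite HM !ordrE.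
by rewrite ordrE ?mulf_neq0 // => -[].
Qed.

Lemma ordr1 : ordr 1 = 0.
Proof.
have := @ordrM 1 1 (oner_neq0 K) (oner_neq0 K); rewrite mulr1 => h.
have : ordr 1 + ordr 1 - ordr 1 = ordr 1 - ordr 1 by rewrite -h.
by rewrite addrK subrr.
Qed.

Lemma ordrN1 : ordr (-1) = 0.
Proof.
have hn : (-1 : K) != 0 by rewrite oppr_eq0 oner_neq0.
have := @ordrM _ _ hn hn; rewrite mulrNN mulr1 ordr1 => h.
have : ordr (-1) * 2 = 0 by rewrite mulr_natr mulr2n -h.
by move/eqP; rewrite mulf_eq0 pnatr_eq0 orbF => /eqP.
Qed.

Lemma ordrX x n : x != 0 -> ordr (x ^+ n) = n%:R * ordr x.
Proof.
move=> hx; elim: n => [|n IH]; first by rewrite expr0 ordr1 mul0r.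
by rewrite exprS ordrM ?expf_neq0 // IH mulrSr mulrDl mul1r addrC.
Qed.

Lemma ordrV x : x != 0 -> ordr (x^-1) = - ordr x.
Proof.
move=> hx; have := @ordrM _ _ hx (invr_neq0 hx); rewrite divff // ordr1 => h.
by apply/eqP; rewrite -subr_eq0 opprK addrC -h.
Qed.

Lemma p_neq0 : (p%:R : K) != 0.
Proof. case: Ho => H0 _ _ _ Hp; by rewrite -H0 Hp. Qed.

Lemma ordr_p : ordr p%:R = 1.
Proof. case: Ho => _ _ _ _ Hp; by rewrite /ordr_ Hp. Qed.

Lemma ordr_pX l : ordr (p ^ l)%:R = l%:R.
Proof. by rewrite natrX ordrX ?p_neq0 // ordr_p mulr1. Qed.

Lemma ge_nz x B : x != 0 -> B <= ordr x -> ge x B.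
Proof. by move=> hx hB; rewrite /ge_ ordrE // lee_fin. Qed.

Lemma ge_nzE x B : x != 0 -> ge x B -> B <= ordr x.
Proof. by move=> hx; rewrite /ge_ ordrE // lee_fin. Qed.

Lemma ge0 B : ge 0 B.
Proof. by rewrite /ge_ ord0 leey. Qed.

Lemma geD x y B : ge x B -> ge y B -> ge (x + y) B.
Proof.
case: Ho => _ _ _ HA _ hx hy; apply: le_trans (HA x y).
by rewrite le_min; apply/andP.
Qed.

Lemma geN x B : ge x B -> ge (- x) B.
Proof.
have [->|hx] := eqVneq x 0; first by rewrite oppr0.
move=> h; have hn : (-1 : K) != 0 by rewrite oppr_eq0 oner_neq0.
apply: ge_nz; first by rewrite oppr_eq0.
by rewrite -mulN1r ordrM // ordrN1 add0r; apply: ge_nzE.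
Qed.

Lemma ge_sum (I : Type) (r : seq I) (P : pred I) (F : I -> K) B :
  (forall i, P i -> ge (F i) B) -> ge (\sum_(i <- r | P i) F i) B.
Proof. move=> h; apply: (big_ind (fun x => ge x B)) => //; [exact: ge0|move=> x y; exact: geD]. Qed.

End Ord.

Lemma deg_bound (R : realType) (p m n : nat) (I : nat -> seq 'rV[int]_n)
   (i j : nat) (u : 'rV[int]_n) :
  (i < m)%N -> u \in I i -> (m - i <= j)%N ->
  deg_Delta (Delta_gens R p m I) ((p ^ j)%:R *: map_mx (fun z : int => z%:~R) u)
   <= (p ^ (j - (m - i)).+1)%:R.
Proof.
move=> him hu hj.
pose S := Delta_gens R p m I.
pose uR : 'rV[R]_n := map_mx (fun z : int => z%:~R) u.
pose g := (p ^ (m - i - 1))%:R *: uR.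
have gS : g \in S.
  apply/flattenP; exists [seq (p ^ (m - i - 1))%:R *: map_mx (fun z : int => z%:~R) u0 | u0 <- I i].
    by apply/mapP; exists i => //; rewrite mem_iota add0n.
  by apply/mapP; exists u.
pose c : R := (p ^ (j - (m - i)).+1)%:R.
have hc : c *: g = (p ^ j)%:R *: uR.
  rewrite /g scalerA -natrM -expnD; congr (_%:R *: _); congr (p ^ _)%N.
  lia.
have hidx : (index g S < size S)%N by rewrite index_mem.
have Hin : in_scaled_hull S c ((p ^ j)%:R *: uR).
  exists (fun k => (k == index g S)%:R); split.
  - by move=> k; rewrite ler0n.
  - rewrite (bigD1 (Ordinal hidx)) //= eqxx big1 ?addr0 // => k hk.
    by rewrite -(inj_eq val_inj) /= in hk; rewrite (negbTE hk).
  - rewrite (bigD1 (Ordinal hidx)) //= eqxx scale1r big1 ?addr0 ?nth_index //.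
    move=> k hk; rewrite -(inj_eq val_inj) /= in hk.
    by rewrite (negbTE hk) scale0r.
have hlb : has_lbound [set c0 : R | 0 <= c0 /\ in_scaled_hull S c0 ((p ^ j)%:R *: uR)].
  by exists 0 => y [].
apply: (ge_inf hlb); split => //; exact: ler0n.
Qed.

Theorem lemma3p7 (R : realType) (K : fieldType) (ord : K -> \bar R)
    (p m n : nat) (I : nat -> seq 'rV[int]_n) (zeta pi : K)
    (i j : nat) (u : 'rV[int]_n) :
  prime p ->
  is_ordp p ord ->
  (p ^ m).-primitive_root zeta ->
  full_dim (Delta_gens R p m I) ->
  (i < m)%N ->
  ord pi = (((p ^ (m - i - 1))%:R * (p%:R - 1))^-1)%:E ->
  ord_series_conv ord (fun k => pi ^+ (p ^ k) / (p ^ k)%:R) 0 ->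
  ord_series_conv ord (fun k => ratr (AH_coef p k) * pi ^+ k) (zeta ^+ (p ^ i)) ->
  u \in I i ->
  (m - i <= j)%N ->
  ((((p ^ (j - (m - i)).+1)%:R - 1)%R)%:E <=
    ord ((p ^ j)%:R * gamma_ij p j pi)%R
    - ((deg_Delta (Delta_gens R p m I)
          ((p ^ j)%:R *: map_mx (fun z : int => z%:~R) u) / (p%:R - 1))%R)%:E)%E.
Proof.
move=> pp Ho _ _ him hpi Hser _ hu hj.
have p2 : (1 < p)%N by apply: prime_gt1.
pose P : R := (p ^ (m - i - 1))%:R.
pose a : R := (P * (p%:R - 1))^-1.
have P0 : 0 < P by rewrite ltr0n expn_gt0; lia.
have p1 : 0 < (p%:R - 1 : R) by rewrite subr_gt0 ltr1n.
have pi0 : pi != 0.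
  apply/negP => /eqP h; move: hpi; rewrite h (ord0 Ho) //.
have api : ordr_ ord pi = a by rewrite /ordr_ hpi.
pose s l := pi ^+ (p ^ l) / (p ^ l)%:R.
have s0 l : s l != 0.
  by rewrite mulf_neq0 ?expf_neq0 ?invr_neq0 // natrX expf_neq0 // (p_neq0 Ho).
have pl0 l : ((p ^ l)%:R : K) != 0 by rewrite natrX expf_neq0 // (p_neq0 Ho).
have ords l : ordr_ ord (s l) = (p ^ l)%:R * a - l%:R.
  by rewrite (ordrM Ho) ?invr_neq0 ?expf_neq0 // (ordrV Ho) // (ordrX Ho) // (ordr_pX Ho) api.
pose B : R := (p ^ j.+1)%:R * a - (j.+1)%:R.
have stepP l : (m - i - 1 <= l)%N ->
    (p ^ l)%:R * a - l%:R <= (p ^ l.+1)%:R * a - (l.+1)%:R.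
  move=> hl.
  have e : (p ^ l = p ^ (l - (m - i - 1)) * p ^ (m - i - 1))%N by rewrite -expnD subnK.
  have -> : (p ^ l.+1)%:R * a = (p ^ l)%:R * a + (p ^ (l - (m - i - 1)))%:R.
    rewrite expnS e !natrM /a -/P; field.
    by rewrite (gt_eqF P0) (gt_eqF p1).
  rewrite -natr1; have : 1 <= ((p ^ (l - (m - i - 1)))%:R : R).
    by rewrite ler1n expn_gt0; lia.
  lra.
have bndB l : (j.+1 <= l)%N -> B <= ordr_ ord (s l).
  move=> hl; rewrite ords -(subnKC hl).
  elim: (l - j.+1)%N => [|d IH]; first by rewrite addn0.
  apply: (le_trans IH); rewrite addnS; apply: stepP; lia.
have gB : ge_ ord (gamma_ij p j pi) B.
  have [N HN] := Hser B.
  have := HN (maxn N j.+1) (leq_maxl _ _).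
  rewrite subr0 -(big_mkord xpredT s) (big_cat_nat (leq0n j.+1) (leq_maxr N j.+1)) /=.
  rewrite big_mkord => hT.
  have -> : gamma_ij p j pi = (\sum_(i0 < j.+1) s i0 + \sum_(j.+1 <= i0 < maxn N j.+1) s i0)
      - \sum_(j.+1 <= i0 < maxn N j.+1) s i0 by rewrite addrK.
  apply: (geD Ho) => //; apply: (geN Ho); rewrite big_nat_cond.
  apply: (ge_sum Ho) => l /andP [/andP [hl _] _].
  by apply: (ge_nz Ho) => //; apply: bndB.
have gJ : ge_ ord ((p ^ j)%:R * gamma_ij p j pi) (j%:R + B).
  have [->|g0] := eqVneq (gamma_ij p j pi) 0; first by rewrite mulr0; apply: (ge0 Ho).
  apply: (ge_nz Ho); first by rewrite mulf_neq0.
  by rewrite (ordrM Ho) // (ordr_pX Ho) lerD2l; apply: (ge_nzE Ho).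
have hD := @deg_bound R p m n I i j u him hu hj.
set D := deg_Delta _ _ in hD *.
apply: le_trans (_ : ((j%:R + B) - D / (p%:R - 1))%:E <= _)%E; last first.
  by rewrite EFinB; apply: leeB.
rewrite lee_fin.
pose e := (j - (m - i)).+1.
pose Q : R := (p ^ e)%:R.
have ee : (p ^ j.+1 = p * p ^ e * p ^ (m - i - 1))%N.
  by rewrite /e -expnS -expnD; congr (p ^ _)%N; lia.
have hB : j%:R + B = p%:R * Q / (p%:R - 1) - 1.
  rewrite /B ee !natrM /a -/P /Q -natr1; field.
  by rewrite (gt_eqF P0) (gt_eqF p1).
rewrite hB -/Q -/e.
have : D / (p%:R - 1) <= Q / (p%:R - 1) by rewrite ler_pM2r ?invr_gt0.
have -> : p%:R * Q / (p%:R - 1) = Q + Q / (p%:R - 1).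
  by field; rewrite (gt_eqF p1).
lra.
Qed.
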